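(* Let $f\in C^1_c(\mathbb{R})$ be real-valued. For every $\varepsilon>0$ there exist $N\in\mathbb{N}$, $c_1,\dots,c_N\in\mathbb{R}$ and $\eta_1,\dots,\eta_N\in\mathbb{C}$ with $\operatorname{Im}\eta_j>0$ such that $$\left\|f-\sum_{j=1}^Nc_j\operatorname{Im}\frac{1}{\cdot-\eta_j}\right\|_{\mathcal{L}_w}<\varepsilon.$$
   Context: $\mathcal{L}_w$ is the space of functions $f:\mathbb{R}\to\mathbb{R}$ with $\lim_{x\to-\infty}f(x)=0$ and $\|f\|_{\mathcal{L}_w}:=\sup_{x\ne y}\sqrt{1+x^2}\sqrt{1+y^2}\left|\frac{f(x)-f(y)}{x-y}\right|<\infty$; it is a normed space with this norm. Here $\operatorname{Im}\frac{1}{\cdot-\eta}$ denotes the function $x\mapsto\operatorname{Im}\frac{1}{x-\eta}$. *)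

(* Defs.v *)
From Stdlib Require Import Reals.
Open Scope R_scope.

Definition C1c (f : R -> R) : Prop :=
  (exists f' : R -> R,
      (forall x, derivable_pt_lim f x (f' x)) /\ continuity f') /\
  (exists K : R, forall x, K < Rabs x -> f x = 0).

(* For eta = a + i b (a, b real):
   Im (1 / (x - eta)) = Im ((x - a + i b) / ((x-a)^2 + b^2)) = b / ((x-a)^2 + b^2). *)
Definition im_inv_shift (a b : R) (x : R) : R := b / ((x - a)^2 + b^2).

Fixpoint sum_lt (N : nat) (g : nat -> R) : R :=
  match N with
  | O => 0
  | S n => sum_lt n g + g n
  end.

Definition Lw_quot (f : R -> R) (x y : R) : R :=
  sqrt (1 + x^2) * sqrt (1 + y^2) * Rabs ((f x - f y) / (x - y)).

(* ||f||_{L_w} < eps, i.e. sup_{x<>y} Lw_quot f x y < eps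
   (the supremum is <= some M < eps). *)
Definition Lw_norm_lt (f : R -> R) (eps : R) : Prop :=
  exists M, M < eps /\ forall x y, x <> y -> Lw_quot f x y <= M.

(* Main.v *)
Require Import Defs.
From Stdlib Require Import Reals Lra Lia Psatz.
From Coquelicot Require Import Coquelicot.
Open Scope R_scope.


Lemma sum_lt_ext N u v : (forall j, (j<N)%nat -> u j = v j) -> sum_lt N u = sum_lt N v.
Proof. induction N; simpl; intros H; auto. rewrite IHN by (intros; apply H; lia). rewrite H by lia. auto. Qed.

Lemma sum_lt_minus N u v : sum_lt N u - sum_lt N v = sum_lt N (fun j => u j - v j).
Proof. induction N; simpl; [ring|]. rewrite <- IHN. ring. Qed.

Lemma sum_lt_plus N u v : sum_lt N u + sum_lt N v = sum_lt N (fun j => u j + v j).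
Proof. induction N; simpl; [ring|]. rewrite <- IHN. ring. Qed.

Lemma sum_lt_scal N k u : k * sum_lt N u = sum_lt N (fun j => k * u j).
Proof. induction N; simpl; [ring|]. rewrite <- IHN. ring. Qed.

Lemma sum_lt_abs N u : Rabs (sum_lt N u) <= sum_lt N (fun j => Rabs (u j)).
Proof. induction N; simpl. rewrite Rabs_R0; lra.
  eapply Rle_trans; [apply Rabs_triang|]. lra. Qed.

Lemma sum_lt_le N u v : (forall j, (j<N)%nat -> u j <= v j) -> sum_lt N u <= sum_lt N v.
Proof. induction N; simpl; intros H; [lra|].
  assert (sum_lt N u <= sum_lt N v) by (apply IHN; intros; apply H; lia).
  assert (u N <= v N) by (apply H; lia). lra. Qed.

Lemma sum_lt_const N k : sum_lt N (fun _ => k) = INR N * k.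
Proof. induction N; simpl sum_lt. simpl; ring. rewrite IHN, S_INR. ring. Qed.

Lemma sum_lt_tele N u : sum_lt N (fun j => u j - u (S j)) = u 0%nat - u N.
Proof. induction N; simpl; [ring|]. rewrite IHN. ring. Qed.

Lemma sum_lt_abel N (f q : nat -> R) :
  sum_lt (S N) (fun j => f j * (q j - q (S j))) =
  f 0%nat * q 0%nat - f N * q (S N) + sum_lt N (fun j => (f (S j) - f j) * q (S j)).
Proof. induction N. simpl; ring. change (sum_lt (S (S N)) (fun j => f j * (q j - q (S j))))
  with (sum_lt (S N) (fun j => f j * (q j - q (S j))) + f (S N) * (q (S N) - q (S (S N)))).
  rewrite IHN. simpl. ring. Qed.

Lemma deriv_mono_le (H H' G G' : R -> R) u v :
  (forall x, derivable_pt_lim H x (H' x)) -> (forall x, derivable_pt_lim G x (G' x)) ->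
  (forall x, H' x <= G' x) -> u <= v -> H v - H u <= G v - G u.
Proof.
  intros dH dG le uv. destruct (Req_dec u v) as [->|neq]. lra.
  assert (uv' : u < v) by lra.
  destruct (MVT_cor2 (fun t => G t - H t) (fun t => G' t - H' t) u v uv') as [c [e _]].
  intros. apply derivable_pt_lim_minus; auto.
  specialize (le c). assert (0 <= (G' c - H' c) * (v - u)) by (apply Rmult_le_pos; lra).
  lra.
Qed.

Lemma sin_lower t : 0 <= t <= 2 -> t / 3 <= sin t.
Proof.
  intros Ht. assert (HP: 3/2 < PI/2) by apply PI2_3_2.
  destruct (SIN t) as [H1 _]; try lra.
  eapply Rle_trans; [|exact H1]. unfold sin_lb, sin_approx, sin_term. simpl sum_f_R0.
  replace (INR (Factorial.fact (2*3+1))) with 5040 by (simpl; lra).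
  replace (INR (Factorial.fact (2*2+1))) with 120 by (simpl; lra).
  replace (INR (Factorial.fact (2*1+1))) with 6 by (simpl; lra).
  replace (INR (Factorial.fact (2*0+1))) with 1 by (simpl; lra).
  simpl pow.
  assert (t*t <= 4) by nra. assert (0 <= t*t*t*t*t) by (repeat apply Rmult_le_pos; lra).
  nra.
Qed.

Lemma atan_bnd (H H' : R -> R) D u v :
  (forall x, derivable_pt_lim H x (H' x)) -> (forall x, (1+x^2)*Rabs (H' x) <= D) -> u <= v ->
  Rabs (H v - H u) <= D * (atan v - atan u).
Proof.
  intros dH bd uv.
  assert (B: forall x, Rabs (H' x) <= D * / (1 + x^2)).
  { intros x. assert (0 < 1 + x^2) by nra. specialize (bd x).
    apply (Rmult_le_reg_l (1+x^2)); auto. rewrite <- Rmult_assoc, (Rmult_comm _ D), Rmult_assoc, Rinv_r; lra. }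
  assert (dA: forall x, derivable_pt_lim (fun t => D * atan t) x (D * / (1 + x^2))).
  { intros x. apply derivable_pt_lim_scal with (f := atan). apply derivable_pt_lim_atan. }
  assert (dB: forall x, derivable_pt_lim (fun t => - (D * atan t)) x (- (D * / (1 + x^2)))).
  { intros x. apply derivable_pt_lim_opp with (f := fun t => D * atan t). apply dA. }
  apply Rabs_le; split.
  - pose proof (deriv_mono_le (fun t => - (D * atan t)) (fun x => - (D * / (1 + x^2))) H H' u v dB dH) as T.
    assert (- (D * atan v) - - (D * atan u) <= H v - H u).
    { apply T; auto. intros x; specialize (B x). pose proof (Rle_abs (- H' x)). rewrite Rabs_Ropp in *. lra. }
    lra.
  - pose proof (deriv_mono_le H H' (fun t => D * atan t) (fun x => D * / (1 + x^2)) u v dH dA) as T.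
    assert (H v - H u <= D * atan v - D * atan u).
    { apply T; auto. intros x; specialize (B x). pose proof (Rle_abs (H' x)). lra. }
    lra.
Qed.

Lemma Lw_quot_sym H x y : x <> y -> Lw_quot H x y = Lw_quot H y x.
Proof. intros n. unfold Lw_quot. replace ((H x - H y) / (x - y)) with ((H y - H x) / (y - x)).
  ring. field. split; lra. Qed.

Lemma sin_diff_atan x y : sin (atan y - atan x) = (y - x) / (sqrt (1 + x^2) * sqrt (1 + y^2)).
Proof.
  rewrite sin_minus, sin_atan, cos_atan, sin_atan, cos_atan.
  unfold Rsqr. replace (x*x) with (x^2) by ring. replace (y*y) with (y^2) by ring.
  assert (0 < sqrt (1 + x^2)) by (apply sqrt_lt_R0; nra).
  assert (0 < sqrt (1 + y^2)) by (apply sqrt_lt_R0; nra).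
  field. lra.
Qed.

Lemma abs4 a b c d : Rabs (a + b + c + d) <= Rabs a + Rabs b + Rabs c + Rabs d.
Proof. pose proof (Rabs_triang (a+b+c) d). pose proof (Rabs_triang (a+b) c).
  pose proof (Rabs_triang a b). lra. Qed.

Lemma lw_from_deriv (H H' : R -> R) D :
  (forall x, derivable_pt_lim H x (H' x)) -> (forall x, (1+x^2)*Rabs (H' x) <= D) ->
  (forall e, 0 < e -> forall X, exists z, X <= z /\ Rabs (H z) <= e /\ Rabs (H (-z)) <= e) ->
  forall x y, x <> y -> Lw_quot H x y <= 3 * D.
Proof.
  intros dH bd tl.
  assert (D0 : 0 <= D). { specialize (bd 0). pose proof (Rabs_pos (H' 0)). nra. }
  assert (key: forall x y, x < y -> Lw_quot H x y <= 3 * D).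
  { intros x y xy.
    set (al := atan y - atan x).
    assert (al0: 0 < al) by (apply Rlt_0_minus, atan_increasing; auto).
    pose proof (atan_bound x). pose proof (atan_bound y).
    assert (alP : al < PI) by (unfold al; lra).
    assert (B1: Rabs (H y - H x) <= D * al) by (apply atan_bnd with H'; auto; lra).
    assert (B2: Rabs (H y - H x) <= D * (PI - al)).
    { apply Rle_plus_epsilon. intros e e0.
      destruct (tl (e/2) ltac:(lra) (Rabs x + Rabs y + 1)) as [z [zX [hz hz']]].
      pose proof (Rle_abs x). pose proof (Rle_abs (-x)). pose proof (Rle_abs y). pose proof (Rle_abs (-y)).
      rewrite Rabs_Ropp in *.
      assert (C1: Rabs (H z - H y) <= D * (atan z - atan y)) by (apply atan_bnd with H'; auto; lra).
      assert (C2: Rabs (H x - H (-z)) <= D * (atan x - atan (-z))) by (apply atan_bnd with H'; auto; lra).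
      rewrite atan_opp in C2. pose proof (atan_bound z).
      assert (Rabs (H y - H x) <= Rabs (H z - H y) + Rabs (H z) + Rabs (H (-z)) + Rabs (H x - H (-z))).
      { replace (H y - H x) with ((-(H z - H y)) + H z + (- H (-z)) + (-(H x - H (-z)))) by ring.
        pose proof (abs4 (-(H z - H y)) (H z) (- H (-z)) (-(H x - H (-z)))) as A4.
        rewrite !Rabs_Ropp in A4. exact A4. }
      unfold al. nra. }
    assert (B3: Rabs (H y - H x) <= 3 * D * sin al).
    { pose proof PI2_3_2. pose proof PI_4. destruct (Rle_lt_dec al (PI/2)).
      - pose proof (sin_lower al ltac:(lra)). nra.
      - replace (sin al) with (sin (PI - al)) by apply sin_PI_x.
        pose proof (sin_lower (PI - al) ltac:(lra)). nra. }
    unfold al in B3. rewrite sin_diff_atan in B3.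
    assert (0 < sqrt (1 + x^2)) by (apply sqrt_lt_R0; nra).
    assert (0 < sqrt (1 + y^2)) by (apply sqrt_lt_R0; nra).
    unfold Lw_quot.
    replace ((H x - H y) / (x - y)) with ((H y - H x) / (y - x)) by (field; lra).
    rewrite Rabs_div, (Rabs_right (y - x)) by lra.
    set (Sx := sqrt (1 + x^2)) in *. set (Sy := sqrt (1 + y^2)) in *.
    apply (Rmult_le_reg_r (y - x)); [lra|].
    replace (Sx * Sy * (Rabs (H y - H x) / (y - x)) * (y - x)) with (Sx * Sy * Rabs (H y - H x)) by (field; lra).
    replace (3 * D * ((y - x) / (Sx * Sy))) with (3 * D * (y - x) / (Sx * Sy)) in B3 by (field; lra).
    apply (Rmult_le_compat_l (Sx * Sy)) in B3; [|nra].
    replace (Sx * Sy * (3 * D * (y - x) / (Sx * Sy))) with (3 * D * (y - x)) in B3 by (field; lra).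
    lra. }
  intros x y n. destruct (Rlt_or_le x y). auto. rewrite Lw_quot_sym by auto. apply key. lra.
Qed.

Definition pk (b y : R) := b / (y^2 + b^2).
Definition dpk (b y : R) := -2*b*y/(y^2+b^2)^2.
Definition ddpk (b y : R) := (6*b*y^2 - 2*b^3)/(y^2+b^2)^3.
Definition sk (b y : R) := atan (y / b).

Lemma d_pk b y : 0 < b -> derivable_pt_lim (pk b) y (dpk b y).
Proof. intros hb. apply is_derive_Reals. unfold pk, dpk. assert (0 < y^2 + b^2) by nra.
  auto_derive. lra. field. lra. Qed.

Lemma d_dpk b y : 0 < b -> derivable_pt_lim (dpk b) y (ddpk b y).
Proof. intros hb. apply is_derive_Reals. unfold ddpk, dpk. assert (0 < y^2 + b^2) by nra.
  auto_derive. intro E; apply Rmult_integral in E; destruct E as [E|E]; nra. field. lra. Qed.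

Lemma d_sk b y : 0 < b -> derivable_pt_lim (sk b) y (pk b y).
Proof. intros hb. unfold sk, pk.
  replace (b / (y^2 + b^2)) with (/ (1 + (y/b)^2) * (/ b)) by (assert (0 < y^2+b^2) by nra; field; split; lra).
  apply (derivable_pt_lim_comp (fun t => t / b) atan).
  - replace (/ b) with (1 * / b) by ring. apply derivable_pt_lim_scal_right with (f := id).
    apply derivable_pt_lim_id.
  - apply derivable_pt_lim_atan.
Qed.

Lemma d_term c a b x : 0 < b ->
  derivable_pt_lim (fun y => c * im_inv_shift a b y) x (c * dpk b (x - a)).
Proof. intros hb. apply is_derive_Reals. unfold im_inv_shift, dpk. assert (0 < (x-a)^2 + b^2) by (pose proof (pow2_ge_0 (x-a)); nra).
  auto_derive. lra. field. lra. Qed.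

Lemma d_sum N (F : nat -> R -> R) (F' : nat -> R) x :
  (forall j, (j < N)%nat -> derivable_pt_lim (F j) x (F' j)) ->
  derivable_pt_lim (fun y => sum_lt N (fun j => F j y)) x (sum_lt N F').
Proof. induction N; intros H; simpl.
  - apply derivable_pt_lim_const.
  - apply (derivable_pt_lim_plus (fun y => sum_lt N (fun j => F j y)) (F N)).
    apply IHN; intros; apply H; lia. apply H; lia.
Qed.

Definition vanish (F : R -> R) := forall e, 0 < e -> exists X, forall z, X <= Rabs z -> Rabs (F z) <= e.

Lemma vanish_plus F G : vanish F -> vanish G -> vanish (fun x => F x + G x).
Proof. intros hF hG e he. destruct (hF (e/2) ltac:(lra)) as [X1 H1]. destruct (hG (e/2) ltac:(lra)) as [X2 H2].
  exists (Rmax X1 X2). intros z hz. pose proof (Rmax_l X1 X2). pose proof (Rmax_r X1 X2).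
  eapply Rle_trans; [apply Rabs_triang|]. specialize (H1 z ltac:(lra)). specialize (H2 z ltac:(lra)). lra. Qed.

Lemma vanish_term c a b : 0 < b -> vanish (fun x => c * im_inv_shift a b x).
Proof. intros hb e he. exists (Rabs a + (Rabs c + 1) * b / e + 1). intros z hz.
  unfold im_inv_shift. rewrite Rabs_mult.
  set (u := z - a). assert (hu : (Rabs c + 1) * b / e + 1 <= Rabs u).
  { unfold u. pose proof (Rabs_triang_inv z a). lra. }
  assert (0 <= (Rabs c + 1) * b / e). { apply Rmult_le_pos. pose proof (Rabs_pos c). nra. left; apply Rinv_0_lt_compat; lra. }
  assert (1 <= Rabs u) by lra.
  assert (Rabs u <= u^2). { replace (u^2) with (Rabs u * Rabs u) by (rewrite <- Rabs_mult; rewrite Rabs_right; [ring|nra]). nra. }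
  assert (0 < u^2 + b^2) by nra.
  rewrite (Rabs_right (b / _)) by (apply Rle_ge, Rmult_le_pos; [lra|left; apply Rinv_0_lt_compat; lra]).
  unfold Rdiv. apply (Rmult_le_reg_r (u^2+b^2)); auto. rewrite Rmult_assoc, Rmult_assoc, Rinv_l by lra.
  assert ((Rabs c + 1) * b <= e * (u^2+b^2)).
  { assert ((Rabs c + 1) * b / e * e = (Rabs c + 1) * b) by (field; lra). nra. }
  pose proof (Rabs_pos c). nra.
Qed.

Lemma vanish_sum N c a b : (forall j, (j<N)%nat -> 0 < b j) ->
  vanish (fun x => sum_lt N (fun j => c j * im_inv_shift (a j) (b j) x)).
Proof. induction N; intros H; simpl.
  - intros e he. exists 0. intros. rewrite Rabs_R0; lra.
  - apply (vanish_plus (fun x => sum_lt N (fun j => c j * im_inv_shift (a j) (b j) x))).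
    apply IHN; intros; apply H; lia. apply vanish_term, H; lia.
Qed.

Lemma div_le A B C : 0 < B -> A <= C * B -> A / B <= C.
Proof. intros hB h. apply (Rmult_le_reg_r B); auto. replace (A / B * B) with A by (field; lra). lra. Qed.

Lemma abs_div_le A B C : 0 < B -> Rabs A <= C * B -> Rabs (A / B) <= C.
Proof. intros hB h. rewrite Rabs_div, (Rabs_right B) by lra. apply div_le; auto. Qed.

Lemma pk_pos b y : 0 < b -> 0 < pk b y.
Proof. intros hb. unfold pk. pose proof (pow2_ge_0 y). apply Rdiv_lt_0_compat; nra. Qed.

Lemma pk_le b y : 0 < b -> pk b y <= / b.
Proof. intros hb. unfold pk. pose proof (pow2_ge_0 y). apply div_le; [nra|].
  replace (/ b * (y^2 + b^2)) with (y^2/b + b) by (field; lra).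
  assert (0 <= y^2/b) by (apply Rdiv_le_0_compat; lra). lra. Qed.

Lemma pk_far b y : 0 < b -> y <> 0 -> pk b y <= b / y^2.
Proof. intros hb hy. unfold pk. assert (0 < y^2) by (rewrite <- pow2_abs; apply pow_lt; apply Rabs_pos_lt; auto).
  unfold Rdiv. apply Rmult_le_compat_l; [lra|]. apply Rinv_le_contravar; nra. Qed.

Lemma dpk_le b y : 0 < b -> Rabs (dpk b y) <= / b^2.
Proof. intros hb. unfold dpk. pose proof (pow2_ge_0 y).
  assert (0 < y^2 + b^2) by nra.
  assert (2*b*Rabs y <= y^2 + b^2). { pose proof (Rabs_pos y). rewrite <- pow2_abs. pose proof (pow2_ge_0 (Rabs y - b)). nra. }
  apply abs_div_le. apply pow_lt; lra.
  replace (-2*b*y) with (-(2*b*y)) by ring. rewrite Rabs_Ropp, Rabs_mult, Rabs_mult, (Rabs_right 2), (Rabs_right b) by lra.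
  replace (/ b ^ 2 * (y ^ 2 + b ^ 2) ^ 2) with ((y^2+b^2)/b^2 * (y^2+b^2)) by (field; lra).
  assert (2 * b * Rabs y <= (y^2+b^2)/b^2 * (y^2+b^2)); [|lra].
  assert (1 <= (y^2+b^2)/b^2). { apply (Rmult_le_reg_r (b^2)). nra. replace ((y^2+b^2)/b^2 * b^2) with (y^2+b^2) by (field; lra). nra. }
  nra.
Qed.

Lemma dpk_far b y : 0 < b -> y <> 0 -> Rabs (dpk b y) <= 2 * b / Rabs y ^ 3.
Proof. intros hb hy. unfold dpk. pose proof (Rabs_pos_lt y hy).
  assert (0 < y^2) by (rewrite <- pow2_abs; nra).
  apply abs_div_le. apply pow_lt; nra.
  replace (-2*b*y) with (-(2*b*y)) by ring. rewrite Rabs_Ropp, Rabs_mult, Rabs_mult, (Rabs_right 2), (Rabs_right b) by lra.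
  set (a := Rabs y) in *. assert (y^2 = a^2) by (unfold a; rewrite pow2_abs; auto).
  rewrite H1. replace (2 * b / a ^ 3 * (a ^ 2 + b ^ 2) ^ 2) with (2 * b * a * ((a^2 + b^2)^2 / a^4)) by (field; lra).
  assert (1 <= (a^2 + b^2)^2 / a^4). { apply (Rmult_le_reg_r (a^4)). apply pow_lt; lra.
    replace ((a^2 + b^2)^2 / a^4 * a^4) with ((a^2 + b^2)^2) by (field; lra).
    assert (0 <= b^2) by nra. assert (0 <= a^2) by nra. nra. }
  assert (0 <= 2*b*a) by nra. nra.
Qed.

Lemma ddpk_le b y : 0 < b -> Rabs (ddpk b y) <= 6 / b^3.
Proof. intros hb. unfold ddpk. pose proof (pow2_ge_0 y).
  assert (0 < y^2 + b^2) by nra.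
  apply abs_div_le. apply pow_lt; lra.
  assert (Rabs (6 * b * y ^ 2 - 2 * b ^ 3) <= 6 * b * (y^2 + b^2)).
  { apply Rabs_le. assert (0 < b^3) by (apply pow_lt; lra). split; nra. }
  replace (6 / b ^ 3 * (y ^ 2 + b ^ 2) ^ 3) with (6 * b * (y^2+b^2) * (((y^2+b^2)/b^2)^2)) by (field; lra).
  assert (1 <= (y^2+b^2)/b^2). { apply (Rmult_le_reg_r (b^2)). nra. replace ((y^2+b^2)/b^2 * b^2) with (y^2+b^2) by (field; lra). nra. }
  assert (1 <= ((y^2+b^2)/b^2)^2) by nra.
  assert (0 <= 6*b*(y^2+b^2)) by nra. nra.
Qed.

Lemma lip (F F' : R -> R) Lc u v : (forall t, derivable_pt_lim F t (F' t)) -> (forall t, Rabs (F' t) <= Lc) ->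
  Rabs (F v - F u) <= Lc * Rabs (v - u).
Proof. intros dF bF. destruct (Rtotal_order u v) as [uv|[uv|uv]].
  - destruct (MVT_cor2 F F' u v uv) as [c [e _]]. intros; auto. rewrite e, Rabs_mult.
    apply Rmult_le_compat_r; auto. apply Rabs_pos.
  - subst. rewrite !Rminus_diag, Rabs_R0. pose proof (Rabs_pos (F' 0)). specialize (bF 0). nra.
  - destruct (MVT_cor2 F F' v u uv) as [c [e _]]. intros; auto.
    rewrite <- Rabs_Ropp, (Rabs_minus_sym v u). replace (- (F v - F u)) with (F u - F v) by ring.
    rewrite e, Rabs_mult. apply Rmult_le_compat_r; auto. apply Rabs_pos.
Qed.

Lemma atan_le_id b : 0 <= b -> atan b <= b.
Proof. intros hb.
  pose proof (deriv_mono_le atan (fun x => / (1 + x^2)) (fun x => x) (fun _ => 1) 0 b derivable_pt_lim_atan derivable_pt_lim_id).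
  rewrite atan_0 in H. assert (atan b - 0 <= b - 0); [|lra]. apply H; auto.
  intros x. pose proof (pow2_ge_0 x). rewrite <- Rinv_1. apply Rinv_le_contravar; lra.
Qed.

Lemma PI_facts : 3 < PI /\ 0 < / PI /\ / PI <= 1.
Proof. pose proof PI2_3_2. split; [lra|]. split. apply Rinv_0_lt_compat; lra.
  rewrite <- Rinv_1. apply Rinv_le_contravar; lra. Qed.

Lemma abs_divPI_le F M : Rabs F <= M -> Rabs (F / PI) <= M.
Proof. intros h. destruct PI_facts as [p1 [p2 p3]]. unfold Rdiv. rewrite Rabs_mult, (Rabs_right (/PI)) by lra.
  pose proof (Rabs_pos F). nra. Qed.

Lemma term1 b h F y : 0 < b -> 0 < h ->
  Rabs (h * F * dpk b y - F * (pk b (y + h/2) - pk b (y - h/2))) <= Rabs F * (h * (3*h/b^3)).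
Proof. intros hb hh.
  destruct (MVT_cor2 (pk b) (dpk b) (y - h/2) (y + h/2) ltac:(lra)) as [z [e hz]].
  { intros; apply d_pk; auto. }
  rewrite e. replace (y + h/2 - (y - h/2)) with h by field.
  replace (h * F * dpk b y - F * (dpk b z * h)) with (F * (h * (dpk b y - dpk b z))) by ring.
  rewrite Rabs_mult. apply Rmult_le_compat_l. apply Rabs_pos.
  rewrite Rabs_mult, (Rabs_right h) by lra. apply Rmult_le_compat_l; [lra|].
  pose proof (lip (dpk b) (ddpk b) (6/b^3) z y (fun t => d_dpk b t hb) (fun t => ddpk_le b t hb)).
  assert (Rabs (y - z) <= h/2) by (apply Rabs_le; lra).
  assert (0 < 6/b^3) by (apply Rdiv_lt_0_compat; [lra|apply pow_lt; lra]).
  replace (3*h/b^3) with (6/b^3 * (h/2)) by (field; lra). nra.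
Qed.

Lemma term2 (f f' : R -> R) b h a om :
  (forall t, derivable_pt_lim f t (f' t)) -> 0 < b -> 0 < h ->
  (forall s, a < s < a + h -> Rabs (f' s - f' (a + h/2)) < om) -> forall P, 0 < P -> P <= / b ->
  Rabs ((f (a + h) - f a) / PI * P - h * f' (a + h/2) / PI * P) <= h * om / b.
Proof. intros df hb hh uc P P0 Pb. destruct PI_facts as [p1 [p2 p3]].
  destruct (MVT_cor2 f f' a (a+h) ltac:(lra)) as [z [e hz]]. intros; auto.
  rewrite e. replace (a + h - a) with h by ring.
  replace (f' z * h / PI * P - h * f' (a + h / 2) / PI * P) with (h * (f' z - f' (a + h/2)) * / PI * P) by (field; lra).
  rewrite !Rabs_mult, (Rabs_right h), (Rabs_right (/PI)), (Rabs_right P) by lra.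
  specialize (uc z hz). pose proof (Rabs_pos (f' z - f' (a + h/2))).
  set (A := Rabs (f' z - f' (a + h / 2))) in *. assert (0 <= om) by lra.
  assert (0 <= h * A) by nra.
  assert (h * A * / PI <= h * A * 1) by (apply Rmult_le_compat_l; lra).
  assert (h * A <= h * om) by (apply Rmult_le_compat_l; lra).
  assert (0 <= h * A * / PI) by (apply Rmult_le_pos; nra).
  unfold Rdiv. apply Rmult_le_compat; auto; lra.
Qed.

Lemma term3 b h G y : 0 < b -> 0 < h ->
  Rabs (h * G * pk b (y - h/2) - G * (sk b y - sk b (y - h))) <= Rabs G * (h * (h / (2 * b^2))).
Proof. intros hb hh.
  destruct (MVT_cor2 (sk b) (pk b) (y - h) y ltac:(lra)) as [z [e hz]].
  { intros; apply d_sk; auto. }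
  rewrite e. replace (y - (y - h)) with h by ring.
  replace (h * G * pk b (y - h/2) - G * (pk b z * h)) with (G * (h * (pk b (y - h/2) - pk b z))) by ring.
  rewrite Rabs_mult. apply Rmult_le_compat_l. apply Rabs_pos.
  rewrite Rabs_mult, (Rabs_right h) by lra. apply Rmult_le_compat_l; [lra|].
  pose proof (lip (pk b) (dpk b) (/b^2) z (y - h/2) (fun t => d_pk b t hb) (fun t => dpk_le b t hb)).
  assert (Rabs (y - h/2 - z) <= h/2) by (apply Rabs_le; lra).
  assert (0 < /b^2) by (apply Rinv_0_lt_compat, pow_lt; lra).
  replace (h / (2*b^2)) with (/b^2 * (h/2)) by (field; lra). nra.
Qed.

Lemma sk_mvt b h y : 0 < b -> 0 < h -> exists z, y - h < z < y /\ sk b y - sk b (y - h) = pk b z * h.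
Proof. intros hb hh. destruct (MVT_cor2 (sk b) (pk b) (y - h) y ltac:(lra)) as [z [e hz]].
  { intros; apply d_sk; auto. } exists z. split; auto. rewrite e. f_equal; ring. Qed.

Lemma term4 b h ro e0 M1 y D : 0 < b -> 0 < h -> h <= ro -> 0 < ro -> 0 <= e0 ->
  Rabs D <= 2 * M1 -> (Rabs y < ro -> Rabs D < e0) ->
  Rabs ((sk b (y + h/2) - sk b (y - h/2)) * D / PI) <=
    e0 * (sk b (y + h/2) - sk b (y - h/2)) / PI + h * (8 * M1 * b / ro^2).
Proof. intros hb hh hr r0 he0 hD uc. destruct PI_facts as [p1 [p2 p3]].
  destruct (sk_mvt b h (y + h/2) hb hh) as [z [hz e]].
  replace (y + h/2 - h) with (y - h/2) in * by field.
  set (w := sk b (y + h / 2) - sk b (y - h / 2)) in *.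
  assert (w0 : 0 < w). { rewrite e. pose proof (pk_pos b z hb). nra. }
  assert (0 <= h * (8 * M1 * b / ro^2)).
  { apply Rmult_le_pos; [lra|]. apply Rdiv_le_0_compat. pose proof (Rabs_pos D). nra. nra. }
  unfold Rdiv. rewrite Rabs_mult, Rabs_mult, (Rabs_right w), (Rabs_right (/PI)) by lra.
  destruct (Rlt_le_dec (Rabs y) ro) as [near|far].
  - specialize (uc near). assert (w * Rabs D <= w * e0) by nra. nra.
  - assert (hz' : ro / 2 <= Rabs z).
    { destruct (Rle_lt_dec 0 y). rewrite Rabs_right in far by lra.
      rewrite Rabs_right; lra. rewrite Rabs_left in far by lra.
      rewrite Rabs_left; lra. }
    assert (z <> 0) by (intro; subst; rewrite Rabs_R0 in hz'; lra).
    pose proof (pk_far b z hb H0).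
    assert (z^2 >= (ro/2)^2). { rewrite <- pow2_abs. apply Rle_ge, pow_incr; lra. }
    assert (b / z^2 <= 4 * b / ro^2).
    { replace (4 * b / ro^2) with (b / (ro/2)^2) by (field; lra). unfold Rdiv.
      apply Rmult_le_compat_l; [lra|]. apply Rinv_le_contravar; nra. }
    assert (w <= h * (4 * b / ro^2)) by (rewrite e; nra).
    assert (w * Rabs D <= h * (4 * b / ro ^ 2) * (2 * M1)).
    { apply Rmult_le_compat; try lra. apply Rabs_pos. }
    assert (w * Rabs D * / PI <= w * Rabs D * 1).
    { apply Rmult_le_compat_l; [|lra]. pose proof (Rabs_pos D). nra. }
    replace (h * (8 * M1 * b / ro ^ 2)) with (h * (4 * b / ro ^ 2) * (2 * M1)) by (field; lra).
    assert (0 <= e0 * w * / PI) by (apply Rmult_le_pos; nra). lra.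
Qed.

Lemma atan_le x y : x <= y -> atan x <= atan y.
Proof. intros h. destruct (Req_dec x y). subst; lra. left; apply atan_increasing; lra. Qed.

Lemma abs5 a b c d e : Rabs (a + b + c + d + e) <= Rabs a + Rabs b + Rabs c + Rabs d + Rabs e.
Proof. pose proof (Rabs_triang (a+b+c+d) e). pose proof (Rabs_triang (a+b+c) d).
  pose proof (Rabs_triang (a+b) c). pose proof (Rabs_triang a b). lra. Qed.

Lemma middle (f f' : R -> R) (M M1 L b h e0 om ro ro2 x : R) (n : nat) :
  (forall t, derivable_pt_lim f t (f' t)) ->
  (forall t, Rabs (f t) <= M) -> (forall t, Rabs (f' t) <= M1) ->
  1 <= L -> f (-L) = 0 -> f L = 0 ->
  (forall t, L - 1 < Rabs t -> f' t = 0) ->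
  0 < b -> b <= 1 -> (1 <= n)%nat -> h = 2*L / INR n -> h <= 1 -> h <= ro -> h <= ro2 -> 0 < ro -> 0 <= e0 ->
  Rabs x <= 2*L+1 ->
  (forall s t, Rabs s <= 2*L+1 -> Rabs t <= 2*L+1 -> Rabs (s - t) < ro -> Rabs (f' s - f' t) < e0) ->
  (forall s t, Rabs s <= 2*L+1 -> Rabs t <= 2*L+1 -> Rabs (s - t) < ro2 -> Rabs (f' s - f' t) < om) ->
  Rabs (f' x - sum_lt (S n) (fun j => (h * f (-L + INR j * h) / PI) * dpk b (x - (-L + INR j * h))))
   <= (2*L+1)*M*(h*3/b^3) + 2*L*(om/b) + L*M1*h/b^2 + (e0 + 2*L*(8*M1*b/ro^2)) + M1*b.
Proof.
  intros df bM bM1 L1 fL1 fL2 f'0 hb hb1 hn hdef h1 hro hro2 ro0 e00 hx uc1 uc2.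
  destruct PI_facts as [p1 [p2 p3]].
  assert (nP : 0 < INR n) by (apply lt_0_INR; lia).
  assert (hP : 0 < h) by (rewrite hdef; apply Rdiv_lt_0_compat; lra).
  assert (nh : INR n * h = 2*L) by (rewrite hdef; field; lra).
  assert (M0 : 0 <= M) by (specialize (bM 0); pose proof (Rabs_pos (f 0)); lra).
  assert (M10 : 0 <= M1) by (specialize (bM1 0); pose proof (Rabs_pos (f' 0)); lra).
  set (A := fun j : nat => -L + INR j * h).
  assert (AS : forall j, A (S j) = A j + h) by (intros; unfold A; rewrite S_INR; ring).
  assert (A0 : A 0%nat = -L) by (unfold A; simpl; ring).
  assert (An : A n = L) by (unfold A; lra).
  assert (Ab : forall j, (j <= n)%nat -> -L <= A j <= L).
  { intros j hj. unfold A. apply le_INR in hj. pose proof (pos_INR j). split; nra. }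
  change (fun j => h * f (-L + INR j * h) / PI * dpk b (x - (-L + INR j * h))) with (fun j => h * f (A j) / PI * dpk b (x - A j)).
  set (G := sum_lt (S n) (fun j => h * f (A j) / PI * dpk b (x - A j))).
  set (q := fun j => pk b (x - A j + h/2)).
  set (T1 := sum_lt (S n) (fun j => f (A j) / PI * (q j - q (S j)))).
  set (c := fun j => A j + h/2).
  set (T2 := sum_lt n (fun j => h * f' (c j) / PI * pk b (x - c j))).
  set (w := fun j => sk b (x - A j) - sk b (x - A (S j))).
  set (T3 := sum_lt n (fun j => f' (c j) / PI * w j)).
  set (W := sum_lt n w).
  assert (E1 : Rabs (G - T1) <= (2*L+1)*M*(h*3/b^3)).
  { unfold G, T1. rewrite sum_lt_minus. eapply Rle_trans; [apply sum_lt_abs|].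
    eapply Rle_trans. apply sum_lt_le with (v := fun _ => M * (h * (3*h/b^3))).
    { intros j hj. unfold q. rewrite AS.
      replace (x - (A j + h) + h/2) with ((x - A j) - h/2) by field.
      replace (h * f (A j) / PI * dpk b (x - A j)) with (h * (f (A j) / PI) * dpk b (x - A j)) by (field; lra).
      eapply Rle_trans; [apply term1; auto|]. apply Rmult_le_compat_r.
      apply Rmult_le_pos; [lra|]. apply Rdiv_le_0_compat; [lra|apply pow_lt; lra].
      apply abs_divPI_le; auto. }
    rewrite sum_lt_const, S_INR.
    assert (0 <= h*3/b^3) by (apply Rdiv_le_0_compat; [lra|apply pow_lt; lra]).
    replace ((INR n + 1) * (M * (h * (3 * h / b ^ 3)))) with ((INR n * h + h) * M * (h*3/b^3)) by (field; lra).
    rewrite nh. apply Rmult_le_compat_r; auto. apply Rmult_le_compat_r; auto. lra. }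
  assert (T1e : T1 = sum_lt n (fun j => (f (A (S j)) - f (A j)) / PI * pk b (x - c j))).
  { unfold T1. rewrite (sum_lt_abel n (fun j => f (A j) / PI) q).
    rewrite A0, An, fL1, fL2.
    replace (0 / PI * q 0%nat - 0 / PI * q (S n)) with 0 by (field; lra). rewrite Rplus_0_l.
    apply sum_lt_ext. intros j hj. unfold q, c. rewrite AS.
    replace (x - (A j + h) + h/2) with (x - (A j + h/2)) by field. field. lra. }
  assert (E2 : Rabs (T1 - T2) <= 2*L*(om/b)).
  { rewrite T1e. unfold T2. rewrite sum_lt_minus. eapply Rle_trans; [apply sum_lt_abs|].
    eapply Rle_trans. apply sum_lt_le with (v := fun _ => h * om / b).
    { intros j hj. rewrite AS. unfold c. apply term2 with (f := f); auto.
      - intros s hs. pose proof (Ab j ltac:(lia)). pose proof (Ab (S j) ltac:(lia)). rewrite AS in *.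
        apply uc2; try (apply Rabs_le; lra). apply Rabs_def1; lra.
      - apply pk_pos; auto.
      - apply pk_le; auto. }
    rewrite sum_lt_const. replace (INR n * (h * om / b)) with (INR n * h * (om/b)) by (field; lra).
    rewrite nh. lra. }
  assert (E3 : Rabs (T2 - T3) <= L*M1*h/b^2).
  { unfold T2, T3. rewrite sum_lt_minus. eapply Rle_trans; [apply sum_lt_abs|].
    eapply Rle_trans. apply sum_lt_le with (v := fun _ => M1 * (h * (h / (2*b^2)))).
    { intros j hj. unfold w, c. rewrite AS.
      replace (x - (A j + h/2)) with ((x - A j) - h/2) by ring.
      replace (x - (A j + h)) with ((x - A j) - h) by ring.
      replace (h * f' (A j + h/2) / PI * pk b (x - A j - h / 2)) with (h * (f' (A j + h/2) / PI) * pk b (x - A j - h / 2)) by (field; lra).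
      eapply Rle_trans; [apply term3; auto|]. apply Rmult_le_compat_r.
      apply Rmult_le_pos; [lra|]. apply Rdiv_le_0_compat; [lra|nra].
      apply abs_divPI_le; auto. }
    rewrite sum_lt_const. replace (INR n * (M1 * (h * (h / (2*b^2))))) with (INR n * h * (M1 * h / (2 * b^2))) by (field; lra).
    rewrite nh. right. field. lra. }
  assert (We : W = sk b (x + L) - sk b (x - L)).
  { unfold W, w. rewrite (sum_lt_tele n (fun j => sk b (x - A j))). rewrite A0, An. f_equal; f_equal; ring. }
  assert (W0 : 0 <= W <= PI).
  { rewrite We. unfold sk. pose proof (atan_bound ((x+L)/b)). pose proof (atan_bound ((x-L)/b)).
    assert (atan ((x-L)/b) <= atan ((x+L)/b)). { apply atan_le. unfold Rdiv. apply Rmult_le_compat_r. left; apply Rinv_0_lt_compat; lra. lra. }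
    lra. }
  assert (T3e : T3 - f' x = sum_lt n (fun j => w j * (f' (c j) - f' x) / PI) + f' x * (W / PI - 1)).
  { unfold T3. replace (sum_lt n (fun j => w j * (f' (c j) - f' x) / PI)) with
      (sum_lt n (fun j => f' (c j) / PI * w j) - sum_lt n (fun j => f' x / PI * w j)).
    rewrite <- (sum_lt_scal n (f' x / PI) w). fold W. field. lra.
    rewrite sum_lt_minus. apply sum_lt_ext. intros. field. lra. }
  assert (E4 : Rabs (sum_lt n (fun j => w j * (f' (c j) - f' x) / PI)) <= e0 + 2*L*(8*M1*b/ro^2)).
  { eapply Rle_trans; [apply sum_lt_abs|].
    eapply Rle_trans. apply sum_lt_le with (v := fun j => e0 * w j / PI + h * (8 * M1 * b / ro^2)).
    { intros j hj. unfold w. rewrite AS.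
      replace (x - A j) with ((x - c j) + h/2) by (unfold c; field).
      replace (x - (A j + h)) with ((x - c j) - h/2) by (unfold c; field).
      apply term4; auto.
      - pose proof (Rabs_triang (f' (c j)) (- f' x)). rewrite Rabs_Ropp in H.
        pose proof (bM1 (c j)). pose proof (bM1 x). unfold Rminus. lra.
      - intros hy. rewrite Rabs_minus_sym in hy. pose proof (Ab j ltac:(lia)). pose proof (Ab (S j) ltac:(lia)).
        rewrite AS in *. apply uc1; auto. apply Rabs_le; unfold c; lra. }
    rewrite <- sum_lt_plus, sum_lt_const.
    replace (sum_lt n (fun j => e0 * w j / PI)) with (e0 / PI * W).
    2:{ unfold W. rewrite sum_lt_scal. apply sum_lt_ext. intros; field; lra. }
    replace (INR n * (h * (8 * M1 * b / ro ^ 2))) with (INR n * h * (8 * M1 * b / ro ^ 2)) by ring.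
    rewrite nh. assert (e0 / PI * W <= e0).
    { replace (e0 / PI * W) with (e0 * (W / PI)) by (field; lra).
      assert (W / PI <= 1). { apply div_le; lra. } assert (0 <= W/PI) by (apply Rdiv_le_0_compat; lra). nra. }
    lra. }
  assert (E5 : Rabs (f' x * (W / PI - 1)) <= M1 * b).
  { destruct (Rlt_le_dec (L - 1) (Rabs x)) as [far|near].
    - rewrite f'0 by auto. rewrite Rmult_0_l, Rabs_R0. nra.
    - rewrite Rabs_mult. apply Rmult_le_compat; try apply Rabs_pos; auto.
      assert (Wl : PI - 2 * b <= W).
      { rewrite We. unfold sk. pose proof (Rle_abs x). pose proof (Rle_abs (-x)). rewrite Rabs_Ropp in *.
        assert (atan (/b) <= atan ((x+L)/b)). { apply atan_le. replace (/b) with (1/b) by (field; lra). unfold Rdiv.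
          apply Rmult_le_compat_r. left; apply Rinv_0_lt_compat; lra. lra. }
        assert (atan ((x-L)/b) <= atan (-/b)). { apply atan_le. replace (-/b) with ((-1)/b) by (field; lra). unfold Rdiv.
          apply Rmult_le_compat_r. left; apply Rinv_0_lt_compat; lra. lra. }
        rewrite atan_opp, atan_inv in * by lra. pose proof (atan_le_id b ltac:(lra)). lra. }
      rewrite Rabs_left1.
      + assert (1 - 2*b/PI <= W/PI). { apply (Rmult_le_reg_r PI); [lra|]. replace ((1 - 2*b/PI) * PI) with (PI - 2*b) by (field; lra).
          replace (W / PI * PI) with W by (field; lra). lra. }
        assert (2*b/PI <= b). { apply div_le; [lra|nra]. } lra.
      + assert (W / PI <= 1) by (apply div_le; lra). lra. }
  replace (f' x - G) with (-(G - T1) + -(T1 - T2) + -(T2 - T3) + - sum_lt n (fun j => w j * (f' (c j) - f' x) / PI) + - (f' x * (W / PI - 1))).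
  2:{ lra. }
  eapply Rle_trans; [apply abs5|]. rewrite !Rabs_Ropp. lra.
Qed.

Lemma tail_est (f : R -> R) M L b h x n :
  (forall t, Rabs (f t) <= M) -> 1 <= L -> 0 < b -> (1 <= n)%nat -> h = 2*L / INR n -> h <= 1 ->
  2*L+1 <= Rabs x ->
  (1 + x^2) * Rabs (sum_lt (S n) (fun j => (h * f (-L + INR j * h) / PI) * dpk b (x - (-L + INR j * h))))
   <= (2*L+1)*M*32*b.
Proof.
  intros bM L1 hb hn hdef h1 hx. destruct PI_facts as [p1 [p2 p3]].
  assert (nP : 0 < INR n) by (apply lt_0_INR; lia).
  assert (hP : 0 < h) by (rewrite hdef; apply Rdiv_lt_0_compat; lra).
  assert (nh : INR n * h = 2*L) by (rewrite hdef; field; lra).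
  assert (M0 : 0 <= M) by (specialize (bM 0); pose proof (Rabs_pos (f 0)); lra).
  set (a := Rabs x) in *. assert (a1 : 1 <= a) by lra.
  assert (x2 : x^2 = a^2) by (unfold a; rewrite pow2_abs; auto).
  assert (Hs : Rabs (sum_lt (S n) (fun j => (h * f (-L + INR j * h) / PI) * dpk b (x - (-L + INR j * h))))
     <= INR (S n) * (h * M * (16 * b / a^3))).
  { eapply Rle_trans; [apply sum_lt_abs|]. rewrite <- sum_lt_const. apply sum_lt_le. intros j hj.
    rewrite Rabs_mult. apply Rmult_le_compat; try apply Rabs_pos.
    - replace (h * f (-L + INR j * h) / PI) with (h * (f (-L + INR j * h) / PI)) by (field; lra).
      rewrite Rabs_mult, (Rabs_right h) by lra. apply Rmult_le_compat_l; [lra|]. apply abs_divPI_le; auto.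
    - set (y := x - (-L + INR j * h)).
      assert (jb : INR j * h <= 2 * L). { rewrite <- nh. apply Rmult_le_compat_r; [lra|]. apply le_INR; lia. }
      pose proof (pos_INR j).
      assert (ya : a / 2 <= Rabs y).
      { unfold y. pose proof (Rabs_triang_inv x (-L + INR j * h)) as T. fold a in T.
        assert (0 <= INR j * h) by (apply Rmult_le_pos; lra).
        assert (Rabs (-L + INR j * h) <= L). { apply Rabs_le. split; lra. } lra. }
      assert (y <> 0) by (intro e; rewrite e, Rabs_R0 in ya; lra).
      eapply Rle_trans; [apply dpk_far; auto|].
      assert ((a/2)^3 <= Rabs y ^3) by (apply pow_incr; lra).
      assert (0 < (a/2)^3) by (apply pow_lt; lra).
      replace (16 * b / a^3) with (2 * b / (a/2)^3) by (field; lra).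
      unfold Rdiv. apply Rmult_le_compat_l; [lra|]. apply Rinv_le_contravar; auto. }
  rewrite S_INR in Hs.
  replace ((INR n + 1) * (h * M * (16 * b / a ^ 3))) with ((INR n * h + h) * M * (16 * b / a ^ 3)) in Hs by ring.
  rewrite nh in Hs.
  assert (0 < a^3) by (apply pow_lt; lra).
  assert (0 <= M * (16 * b / a^3)) by (apply Rmult_le_pos; [lra|]; apply Rdiv_le_0_compat; lra).
  assert (Hs2 : Rabs (sum_lt (S n) (fun j => (h * f (-L + INR j * h) / PI) * dpk b (x - (-L + INR j * h))))
     <= (2*L+1) * (M * (16 * b / a^3))).
  { eapply Rle_trans; [exact Hs|]. rewrite Rmult_assoc. apply Rmult_le_compat_r; lra. }
  rewrite x2. eapply Rle_trans. apply Rmult_le_compat_l; [nra|exact Hs2].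
  replace ((1 + a^2) * ((2*L+1) * (M * (16 * b / a^3)))) with ((2*L+1) * M * (16 * b) * ((1 + a^2) / a^3)) by (field; lra).
  replace ((2*L+1)*M*32*b) with ((2*L+1) * M * (16 * b) * 2) by ring.
  apply Rmult_le_compat_l. assert (0 <= (2*L+1)*M) by nra. nra.
  apply div_le; auto. nra.
Qed.

Lemma bounded_of (g : R -> R) L : (forall x, continuity_pt g x) -> 0 <= L -> (forall t, L < Rabs t -> g t = 0) ->
  exists M, forall t, Rabs (g t) <= M.
Proof. intros cg L0 gz.
  destruct (continuity_ab_maj (fun t => Rabs (g t)) (-L) L ltac:(lra)) as [m [hm _]].
  { intros c _. apply (continuity_pt_comp g Rabs). apply cg. apply Rcontinuity_abs. }
  exists (Rabs (g m)). intros t. destruct (Rlt_le_dec L (Rabs t)).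
  - rewrite gz by auto. rewrite Rabs_R0. apply Rabs_pos.
  - apply hm. pose proof (Rle_abs t). pose proof (Rle_abs (-t)). rewrite Rabs_Ropp in *. lra.
Qed.

Lemma uc_of (g : R -> R) R0 : (forall x, continuity_pt g x) -> forall e, 0 < e -> exists d, 0 < d /\
  forall s t, Rabs s <= R0 -> Rabs t <= R0 -> Rabs (s - t) < d -> Rabs (g s - g t) < e.
Proof. intros cg e he.
  destruct (Heine g (fun c => -R0 <= c <= R0) (compact_P3 (-R0) R0) (fun x _ => cg x) (mkposreal e he)) as [d hd].
  exists d. split. apply cond_pos. intros s t hs ht hst. apply (hd s t); auto.
  pose proof (Rle_abs s). pose proof (Rle_abs (-s)). rewrite Rabs_Ropp in *. lra.
  pose proof (Rle_abs t). pose proof (Rle_abs (-t)). rewrite Rabs_Ropp in *. lra.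
Qed.

Lemma deriv_zero (f : R -> R) K1 t : (forall x, K1 <= Rabs x -> f x = 0) -> K1 < Rabs t -> derivable_pt_lim f t 0.
Proof. intros fz ht e he. exists (mkposreal (Rabs t - K1) ltac:(lra)). simpl. intros hh hn hlt.
  rewrite (fz t) by lra. rewrite fz. replace ((0 - 0) / hh - 0) with 0 by (field; auto). rewrite Rabs_R0; lra.
  pose proof (Rabs_triang_inv t (- hh)). rewrite Rabs_Ropp in H. replace (t - - hh) with (t + hh) in H by ring. lra.
Qed.

Lemma le_div_mul x y P : 0 < P -> x <= y / P -> x * P <= y.
Proof. intros hP h. apply Rmult_le_compat_r with (r := P) in h; [|lra].
  replace (y / P * P) with y in h by (field; lra). auto. Qed.

Theorem lemma5p3 (f : R -> R) (hf : C1c f) (eps : R) (heps : 0 < eps) :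
  exists (N : nat) (c a b : nat -> R),
    (forall j, (j < N)%nat -> 0 < b j) /\
    Lw_norm_lt (fun x => f x - sum_lt N (fun j => c j * im_inv_shift (a j) (b j) x)) eps.
Proof.
  destruct hf as [[f' [df cf']] [K hK]].
  set (K1 := Rabs K + 1).
  assert (fz : forall x, K1 <= Rabs x -> f x = 0). { intros x hx. apply hK. pose proof (Rle_abs K). unfold K1 in hx. lra. }
  assert (K10 : 1 <= K1) by (unfold K1; pose proof (Rabs_pos K); lra).
  set (L := K1 + 1).
  assert (L1 : 1 <= L) by (unfold L; lra).
  assert (fL1 : f (-L) = 0) by (apply fz; rewrite Rabs_Ropp, Rabs_right; unfold L; lra).
  assert (fL2 : f L = 0) by (apply fz; rewrite Rabs_right; unfold L; lra).
  assert (f'0 : forall t, L - 1 < Rabs t -> f' t = 0).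
  { intros t ht. apply (uniqueness_limite f t); auto. apply deriv_zero with K1; auto. unfold L in ht; lra. }
  assert (cf : forall x, continuity_pt f x). { intros x. apply derivable_continuous_pt. exists (f' x). apply df. }
  destruct (bounded_of f K1 cf ltac:(lra)) as [M bM]. { intros; apply fz; lra. }
  destruct (bounded_of f' K1 cf' ltac:(lra)) as [M1 bM1]. { intros; apply f'0; unfold L; lra. }
  assert (M0 : 0 <= M) by (specialize (bM 0); pose proof (Rabs_pos (f 0)); lra).
  assert (M10 : 0 <= M1) by (specialize (bM1 0); pose proof (Rabs_pos (f' 0)); lra).
  set (R0 := 2*L+1).
  set (D := eps/4).
  set (W := 1 + R0^2).
  set (e := D/(5*W)).
  assert (W0: 1 <= W) by (unfold W; nra).
  assert (D0 : 0 < D) by (unfold D; lra).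
  assert (e0: 0 < e) by (unfold e; apply Rdiv_lt_0_compat; lra).
  destruct (uc_of f' R0 cf' (e/2) ltac:(lra)) as [ro [ro0 uc1]].
  set (P1 := 32*(2*L+1)*(M+1)). assert (P10 : 0 < P1) by (unfold P1; nra).
  set (P2 := 32*L*(M1+1)/ro^2). assert (P20 : 0 < P2) by (unfold P2; apply Rdiv_lt_0_compat; nra).
  set (P3 := M1+1). assert (P30 : 0 < P3) by (unfold P3; lra).
  set (b := Rmin 1 (Rmin (D/P1) (Rmin (e/P2) (e/P3)))).
  assert (b0 : 0 < b).
  { unfold b. repeat apply Rmin_glb_lt; try lra; apply Rdiv_lt_0_compat; lra. }
  assert (b1 : b <= 1) by apply Rmin_l.
  assert (bP1 : b * P1 <= D).
  { apply le_div_mul; auto. unfold b. eapply Rle_trans; [apply Rmin_r|apply Rmin_l]. }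
  assert (bP2 : b * P2 <= e).
  { apply le_div_mul; auto. unfold b. eapply Rle_trans; [apply Rmin_r|]. eapply Rle_trans; [apply Rmin_r|apply Rmin_l]. }
  assert (bP3 : b * P3 <= e).
  { apply le_div_mul; auto. unfold b. eapply Rle_trans; [apply Rmin_r|]. eapply Rle_trans; [apply Rmin_r|apply Rmin_r]. }
  set (om := e*b/(2*L)).
  assert (om0 : 0 < om) by (unfold om; apply Rdiv_lt_0_compat; nra).
  destruct (uc_of f' R0 cf' om om0) as [ro2 [ro20 uc2]].
  set (Q1 := 3*(2*L+1)*(M+1)/b^3). assert (Q10 : 0 < Q1) by (unfold Q1; apply Rdiv_lt_0_compat; [nra|apply pow_lt; lra]).
  set (Q2 := L*(M1+1)/b^2). assert (Q20 : 0 < Q2) by (unfold Q2; apply Rdiv_lt_0_compat; [nra|apply pow_lt; lra]).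
  set (hmax := Rmin 1 (Rmin ro (Rmin ro2 (Rmin (e/Q1) (e/Q2))))).
  assert (hm0 : 0 < hmax).
  { unfold hmax. repeat apply Rmin_glb_lt; try lra; apply Rdiv_lt_0_compat; lra. }
  destruct (archimed_cor1 (hmax/(2*L)) ltac:(apply Rdiv_lt_0_compat; lra)) as [n [hn1 hn2]].
  assert (nP : 0 < INR n) by (apply lt_0_INR; lia).
  set (h := 2*L/INR n).
  assert (hh : h <= hmax).
  { unfold h. apply Rmult_lt_compat_l with (r := 2*L) in hn1; [|lra].
    replace (2 * L * (hmax / (2 * L))) with hmax in hn1 by (field; lra). unfold Rdiv. lra. }
  assert (h0 : 0 < h) by (unfold h; apply Rdiv_lt_0_compat; lra).
  assert (h1 : h <= 1) by (eapply Rle_trans; [exact hh|apply Rmin_l]).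
  assert (hro : h <= ro) by (eapply Rle_trans; [exact hh|]; unfold hmax; eapply Rle_trans; [apply Rmin_r|apply Rmin_l]).
  assert (hro2 : h <= ro2).
  { eapply Rle_trans; [exact hh|]; unfold hmax. eapply Rle_trans; [apply Rmin_r|]. eapply Rle_trans; [apply Rmin_r|apply Rmin_l]. }
  assert (hQ1 : h * Q1 <= e).
  { apply le_div_mul; auto. eapply Rle_trans; [exact hh|]; unfold hmax.
    do 3 (eapply Rle_trans; [apply Rmin_r|]). apply Rmin_l. }
  assert (hQ2 : h * Q2 <= e).
  { apply le_div_mul; auto. eapply Rle_trans; [exact hh|]; unfold hmax.
    do 3 (eapply Rle_trans; [apply Rmin_r|]). apply Rmin_r. }
  exists (S n), (fun j => h * f (-L + INR j * h) / PI), (fun j => -L + INR j * h), (fun _ => b).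
  split. { intros; auto. }
  set (g' := fun x => sum_lt (S n) (fun j => (h * f (-L + INR j * h) / PI) * dpk b (x - (-L + INR j * h)))).
  exists (3*D). split. { unfold D; lra. }
  apply lw_from_deriv with (H' := fun x => f' x - g' x).
  - intros x. apply (derivable_pt_lim_minus f (fun y => sum_lt (S n) (fun j => h * f (-L + INR j * h) / PI * im_inv_shift (-L + INR j * h) b y))).
    apply df. unfold g'.
    apply (d_sum (S n) (fun j y => h * f (-L + INR j * h) / PI * im_inv_shift (-L + INR j * h) b y)).
    intros j _. apply d_term; auto.
  - intros x. destruct (Rle_lt_dec (Rabs x) R0) as [mid|far].
    + pose proof (middle f f' M M1 L b h (e/2) om ro ro2 x n df bM bM1 L1 fL1 fL2 f'0 b0 b1
        ltac:(lia) eq_refl h1 hro hro2 ro0 ltac:(lra) mid uc1 uc2) as Hm.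
      fold g' in Hm.
      assert (T1 : (2*L+1)*M*(h*3/b^3) <= e).
      { eapply Rle_trans; [|exact hQ1]. unfold Q1.
        replace ((2*L+1)*M*(h*3/b^3)) with ((h * (3*(2*L+1)/b^3)) * M) by (field; lra).
        replace (h * (3 * (2 * L + 1) * (M + 1) / b ^ 3)) with ((h * (3*(2*L+1)/b^3)) * (M + 1)) by (field; lra).
        apply Rmult_le_compat_l; [|lra]. apply Rmult_le_pos; [lra|]. apply Rdiv_le_0_compat; [lra|apply pow_lt; lra]. }
      assert (T2 : 2*L*(om/b) = e) by (unfold om; field; lra).
      assert (T3 : L*M1*h/b^2 <= e).
      { eapply Rle_trans; [|exact hQ2]. unfold Q2.
        replace (L*M1*h/b^2) with ((h * L / b^2) * M1) by (field; lra).
        replace (h * (L * (M1 + 1) / b ^ 2)) with ((h * L / b^2) * (M1 + 1)) by (field; lra).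
        apply Rmult_le_compat_l; [|lra]. apply Rdiv_le_0_compat; [nra|apply pow_lt; lra]. }
      assert (T4 : 2*L*(8*M1*b/ro^2) <= e/2).
      { assert (b * P2 / 2 <= e/2) by lra. eapply Rle_trans; [|exact H]. unfold P2.
        replace (2*L*(8*M1*b/ro^2)) with ((16 * L * b / ro^2) * M1) by (field; lra).
        replace (b * (32 * L * (M1 + 1) / ro ^ 2) / 2) with ((16 * L * b / ro^2) * (M1 + 1)) by (field; lra).
        apply Rmult_le_compat_l; [|lra]. apply Rdiv_le_0_compat; nra. }
      assert (T5 : M1 * b <= e) by (unfold P3 in bP3; nra).
      assert (Hd : Rabs (f' x - g' x) <= D / W).
      { replace (D / W) with (5 * e) by (unfold e; field; lra). unfold g'. lra. }
      assert (x2 : x^2 <= R0^2). { rewrite <- pow2_abs. apply pow_incr. split; [apply Rabs_pos|auto]. }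
      assert (1 + x^2 <= W) by (unfold W; lra).
      apply Rle_trans with (W * (D / W)).
      * apply Rmult_le_compat; try lra. nra. apply Rabs_pos.
      * right. field. lra.
    + rewrite f'0 by (unfold R0 in far; lra).
      replace (0 - g' x) with (- g' x) by ring. rewrite Rabs_Ropp.
      eapply Rle_trans. apply (tail_est f M L b h x n bM L1 b0 ltac:(lia) eq_refl h1). unfold R0 in far; lra.
      unfold P1 in bP1. nra.
  - intros eps' he X.
    destruct (vanish_sum (S n) (fun j => h * f (-L + INR j * h) / PI) (fun j => -L + INR j * h) (fun _ => b)
       ltac:(intros; auto) eps' he) as [X0 hX0].
    set (z := Rmax X (Rmax X0 K1)).
    assert (zX : X <= z) by apply Rmax_l.
    assert (z1 : Rmax X0 K1 <= z) by apply Rmax_r.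
    pose proof (Rmax_l X0 K1). pose proof (Rmax_r X0 K1).
    assert (az : Rabs z = z) by (apply Rabs_right; lra).
    exists z. split; auto. split.
    + rewrite fz by lra. rewrite Rminus_0_l, Rabs_Ropp. apply hX0. lra.
    + rewrite fz by (rewrite Rabs_Ropp; lra). rewrite Rminus_0_l, Rabs_Ropp. apply hX0. rewrite Rabs_Ropp; lra.
Qed.
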